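(* For any numbers $\Lambda\geq1$ and $d>0$ there exists a constant $C$ such that the following holds for any $\bar x\in S^2$ and any $\bar r\in(0,\pi/2]$. Let $\rho_{\bar x,\bar r}$ be the conformal factor of the Möbius transform corresponding to a dilation at $\bar x$ that maps $B_{\bar r}(\bar x)$ onto a hemisphere. Then for any $x\in B_{\Lambda\bar r}(\bar x)$ and any $r\in(d\bar r,\bar r)$, \[ \|d\varphi_{x,r}\|_{L^\infty(S^2,\rho_{\bar x,\bar r}^2g_{S^2})}\leq C. \]
   Context: $S^2\subset\mathbb{R}^3$ is the unit sphere with round metric $g_{S^2}$ and $B_r(x)$ denotes a geodesic ball. $(\varphi_{x,r})_{x\in S^2,\,r\in(0,\pi/2]}$ is a fixed family of cut-off functions with $\varphi_{x,r}\in C^\infty_0(B_r(x),[0,1])$, $\varphi_{x,r}\equiv1$ on $B_{r/2}(x)$ and $\|d\varphi_{x,r}\|_{L^\infty(S^2,g_{S^2})}\leq C_*r^{-1}$ for a universal constant $C_*$. The conformal factor of a Möbius transform $M$ is $\rho_M=\frac1{\sqrt2}|\nabla M|$, so that $M^*g_{S^2}=\rho_M^2g_{S^2}$; for $\bar r=\pi/2$ the dilation is the identity and $\rho=1$. *)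

(* Defs.v *)
From HB Require Import structures.
From mathcomp Require Import all_boot all_order all_algebra.
From mathcomp Require Import all_classical all_reals all_analysis.
Set Implicit Arguments. Unset Strict Implicit. Unset Printing Implicit Defensive.
Import Order.TTheory GRing.Theory Num.Theory.
Import numFieldNormedType.Exports.
Local Open Scope classical_set_scope.
Local Open Scope ring_scope.

Section S2.
Variable R : realType.
Local Notation pt := 'rV[R]_3.

Definition dot (u v : pt) : R := \sum_(i < 3) u 0 i * v 0 i.

Definition on_S2 (y : pt) : Prop := dot y y = 1.

Definition gdist (x y : pt) : R := acos (dot x y).

Definition gball (x : pt) (r : R) : set pt := [set y | on_S2 y /\ gdist x y < r].

Definition unit_tangent (y v : pt) : Prop := dot y v = 0 /\ dot v v = 1.

(* C^\infty on R^3: a class of everywhere differentiable functions containing F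
   and closed under all directional derivatives *)
Definition smooth3 (F : pt -> R) : Prop :=
  exists S : set (pt -> R), S F /\
    forall G, S G -> (forall p, differentiable G p) /\ (forall v : pt, S ('D_v G)).

(* C^\infty on S^2 = restriction of a smooth function on R^3 *)
Definition smooth_S2 (f : pt -> R) : Prop :=
  exists F, smooth3 F /\ forall y, on_S2 y -> F y = f y.

(* dphi_y(v) for v tangent at y, computed along the great circle
   t |-> cos t y + sin t v *)
Definition dfun (f : pt -> R) (y v : pt) : R :=
  derive1 (fun t : R => f (cos t *: y + sin t *: v)) 0.

(* A w^2 g-unit tangent vector is v / w(y) with v a g-unit tangent vector;
   f is continuous (smooth), so the essential sup is the sup. *)
Definition dLinf_le (w : pt -> R) (f : pt -> R) (C : R) : Prop :=
  forall y v, on_S2 y -> unit_tangent y v -> `|dfun f y v| / w y <= C.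

(* phi in C^\infty_0(B_r(x), [0,1]): smooth, [0,1]-valued, and compact support
   inside B_r(x), i.e. vanishing outside some closed ball of radius r' < r. *)
Definition cutoff_in (x : pt) (r : R) (f : pt -> R) : Prop :=
  [/\ smooth_S2 f,
      (forall y, on_S2 y -> 0 <= f y <= 1) &
      exists2 r', r' < r & forall y, on_S2 y -> r' < gdist x y -> f y = 0].

Definition cutoff_family (Cstar : R) (phi : pt -> R -> pt -> R) : Prop :=
  forall x r, on_S2 x -> 0 < r <= pi / 2 ->
    [/\ cutoff_in x r (phi x r),
        (forall y, gball x (r / 2) y -> phi x r y = 1) &
        dLinf_le (fun _ => 1) (phi x r) (Cstar / r)].

(* Dilation at xbar mapping B_rbar(xbar) onto the hemisphere centred at xbar:
   in stereographic coordinates from -xbar it is z |-> lam z, lam = cot(rbar/2),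
   i.e. M(y) = (((1-lam^2)+(1+lam^2)c) xbar + 2 lam (y - c xbar)) / ((1+lam^2)+(1-lam^2)c)
   with c = y.xbar. Its conformal factor rho_M = |nabla M|/sqrt 2 is: *)
Definition dil_lambda (rbar : R) : R := cos (rbar / 2) / sin (rbar / 2).

Definition rho_dil (xbar : pt) (rbar : R) (y : pt) : R :=
  let lam := dil_lambda rbar in
  2 * lam / ((1 + lam ^+ 2) + (1 - lam ^+ 2) * dot y xbar).

End S2.

(* Main.v *)
Require Import Defs.
From HB Require Import structures.
From mathcomp Require Import all_boot all_order all_algebra.
From mathcomp Require Import all_classical all_reals all_analysis.
From mathcomp Require Import lra ring.
Import Order.TTheory GRing.Theory Num.Theory.
Import numFieldNormedType.Exports.
Local Open Scope classical_set_scope.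
Local Open Scope ring_scope.

Section T. Context {R : realType}.
Lemma mono0 (f df : R -> R) (u : R) : 0 <= u -> (forall x : R, is_derive x (1:R) f (df x)) ->
  (forall x, 0 < x < u -> 0 <= df x) -> f 0 <= f u.
Proof.
rewrite le_eqVlt => /predU1P[<-//|u0] hd hpos.
rewrite -subr_ge0.
have [c cin ->] : exists2 c, c \in `]0, u[ & f u - f 0 = df c * (u - 0).
  apply: MVT => //.
  apply: continuous_subspaceT => x; apply: differentiable_continuous.
  by apply/derivable1_diffP; case: (hd x).
rewrite subr0; apply: mulr_ge0; last exact: ltW.
by apply: hpos; move: cin; rewrite in_itv.
Qed.

Lemma sin_le_id (u : R) : 0 <= u -> sin u <= u.
Proof.
move=> u0.
have D : forall x : R, is_derive x 1 (id - sin) (1 - cos x).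
  by move=> x; apply: is_deriveB.
have := @mono0 _ _ u u0 D.
rewrite !fctE /= sin0 subr0 subr_ge0; apply.
by move=> x _; rewrite subr_ge0 cos_le1.
Qed.

Lemma id_cos_le_sin (u : R) : 0 <= u <= pi -> u * cos u <= sin u.
Proof.
case/andP=> u0 upi.
have D : forall x : R, is_derive x 1 (sin - id * cos) (x * sin x).
  move=> x; apply: is_derive_eq.
  rewrite /= ?scaler1 /GRing.scale /=; ring.
have := @mono0 _ _ u u0 D.
rewrite !fctE /= sin0 mul0r subr0 subr_ge0; apply.
move=> x /andP[x0 xu]; apply: mulr_ge0; first exact: ltW.
by apply: sin_ge0_pi; rewrite (ltW x0) /= (le_trans (ltW xu)).
Qed.

Lemma one_cos_le (a : R) : 1 - cos a <= a ^+ 2 / 2.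
Proof.
wlog a0 : a / 0 <= a.
  move=> h; have [/h//|a0] := leP 0 a.
  by rewrite -cosN -sqrrN; apply: h; rewrite oppr_ge0 ltW.
have D : forall x : R, is_derive x 1 (id * id + 2 *: cos) (2 * (x - sin x)).
  move=> x; apply: is_derive_eq.
  rewrite /= ?scaler1 /GRing.scale /=; ring.
have := @mono0 _ _ a a0 D.
rewrite !fctE /= cos0 mul0r add0r => h.
suff : 2 * 1 <= a * a + 2 * cos a by rewrite expr2; lra.
apply: h.
by move=> x /andP[x0 _]; rewrite mulr_ge0 // subr_ge0 sin_le_id // ltW.
Qed.

Local Notation pt := 'rV[R]_3.
Lemma dotC (u v : pt) : dot u v = dot v u.
Proof. by rewrite /dot; apply: eq_bigr => i _; rewrite mulrC. Qed.
Lemma dotDl (u v w : pt) : dot (u + v) w = dot u w + dot v w.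
Proof. by rewrite /dot -big_split; apply: eq_bigr => i _; rewrite mxE mulrDl. Qed.
Lemma dotZl (k : R) (u w : pt) : dot (k *: u) w = k * dot u w.
Proof. by rewrite /dot mulr_sumr; apply: eq_bigr => i _; rewrite mxE mulrA. Qed.
Lemma dotNl (u w : pt) : dot (- u) w = - dot u w.
Proof. by rewrite -scaleN1r dotZl mulN1r. Qed.
Lemma dotDr (u v w : pt) : dot w (u + v) = dot w u + dot w v.
Proof. by rewrite dotC dotDl !(dotC w). Qed.
Lemma dotZr (k : R) (u w : pt) : dot w (k *: u) = k * dot w u.
Proof. by rewrite dotC dotZl dotC. Qed.
Lemma dotNr (u w : pt) : dot w (- u) = - dot w u.
Proof. by rewrite dotC dotNl dotC. Qed.
Lemma dot_ge0 (u : pt) : 0 <= dot u u.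
Proof. by rewrite /dot; apply: sumr_ge0 => i _; rewrite -expr2 sqr_ge0. Qed.
Definition dotE := (dotDl, dotDr, dotZl, dotZr, dotNl, dotNr).

Lemma dot_range (x z : pt) : on_S2 x -> on_S2 z -> -1 <= dot x z <= 1.
Proof.
rewrite /on_S2 => hx hz.
have h1 := dot_ge0 (x - z); have h2 := dot_ge0 (x + z).
move: h1 h2; rewrite !dotE hx hz (dotC z x) => h1 h2.
apply/andP; split; lra.
Qed.

Lemma acos_lt (c a : R) : -1 <= c <= 1 -> 0 <= a <= pi -> (a < acos c) = (c < cos a).
Proof.
move=> hc ha.
have hc' : c \in `[-1, 1] by rewrite in_itv.
have hac : acos c \in `[0, pi] by rewrite in_itv /= acos_ge0 // acos_lepi.
have ha' : a \in `[0, pi] by rewrite in_itv.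
by rewrite -(ltr_cos ha' hac) acosK.
Qed.

Lemma acos_gt (c a : R) : -1 <= c <= 1 -> 0 <= a <= pi -> (acos c < a) = (cos a < c).
Proof.
move=> hc ha.
have hc' : c \in `[-1, 1] by rewrite in_itv.
have hac : acos c \in `[0, pi] by rewrite in_itv /= acos_ge0 // acos_lepi.
have ha' : a \in `[0, pi] by rewrite in_itv.
by rewrite -(ltr_cos hac ha') acosK.
Qed.

Lemma tri_real (a b c s A B : R) : 0 < A -> 0 < B -> 0 < s -> s * A = B ->
  2 * (1 - a) <= A ^+ 2 -> 2 * (1 - b) <= B ^+ 2 ->
  0 <= s * s * (2 * (1 - a)) - 2 * s * (a - c - 1 + b) + 2 * (1 - b) ->
  2 * (1 - c) <= (A + B) ^+ 2.
Proof.
move=> A0 B0 s0 sA hA hB h.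
have p1 : s * s * (2 * (1 - a)) <= s * s * A ^+ 2 by rewrite ler_wpM2l // mulr_ge0 // ltW.
have p2 : s * s * A ^+ 2 = B ^+ 2 by rewrite -sA; ring.
have p3 : s * (A * B) = B ^+ 2 by rewrite -sA; ring.
have k : s * (a - c - 1 + b) <= s * (A * B) by nra.
have k' : a - c - 1 + b <= A * B by move: k; rewrite ler_pM2l.
nra.
Qed.

Lemma tri (y x z : pt) (A B : R) : on_S2 y -> on_S2 x -> on_S2 z -> 0 < A -> 0 < B ->
  2 * (1 - dot y x) <= A ^+ 2 -> 2 * (1 - dot x z) <= B ^+ 2 ->
  2 * (1 - dot y z) <= (A + B) ^+ 2.
Proof.
rewrite /on_S2 => hy hx hz A0 B0 hA hB.
have s0 : 0 < B / A by rewrite divr_gt0.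
have sA : B / A * A = B by rewrite divfK // gt_eqF.
apply: (@tri_real (dot y x) (dot x z) (dot y z) (B / A) A B A0 B0 s0 sA hA hB).
have := dot_ge0 ((B / A) *: (y - x) - (x - z)).
rewrite !dotE hy hx hz (dotC x y) (dotC z x) (dotC z y).
move=> h; apply: (le_trans h); rewrite le_eqVlt; apply/orP; left; apply/eqP; ring.
Qed.

Lemma final_real (e M r d rbar L c K : R) : 0 <= e -> e <= M / r -> 0 <= M ->
  0 < d -> 0 < rbar -> d * rbar < r -> 0 < L -> 1 <= L * rbar -> L * rbar <= 2 ->
  -1 <= c <= 1 -> 2 * (1 - c) <= (K * rbar) ^+ 2 ->
  e / (2 * L / ((1 + L ^+ 2) + (1 - L ^+ 2) * c)) <= M / d * (1 + K ^+ 2 / 2).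
Proof.
move=> e0 eM M0 d0 rb0 dr L0 Lr1 Lr2 /andP[c1 c2] hc.
have r0 : 0 < r by apply: lt_trans dr; rewrite mulr_gt0.
set D := (1 + L ^+ 2) + (1 - L ^+ 2) * c.
have D0 : 0 < D.
  rewrite /D; have [c3|c3] := ltP c 1.
    have : 0 < L ^+ 2 * (1 - c) by rewrite mulr_gt0 ?exprn_gt0 // subr_gt0.
    nra.
  have -> : c = 1 by apply/eqP; rewrite eq_le c2 c3.
  lra.
rewrite invf_div mulrA ler_pdivrMr ?mulr_gt0 //.
have eD : e * D <= M / r * D by rewrite ler_wpM2r // ltW.
have Mr : M / r <= M / (d * rbar).
  by rewrite ler_wpM2l // lef_pV2 ?posrE ?mulr_gt0 // ltW.
have Dle : D <= 2 * L * rbar * (1 + K ^+ 2 / 2).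
  have t1 : D <= 2 + L ^+ 2 * (1 - c) by rewrite /D; nra.
  have t2 : L ^+ 2 * (1 - c) <= (L * rbar) ^+ 2 * K ^+ 2 / 2.
    have : L ^+ 2 * (2 * (1 - c)) <= L ^+ 2 * (K * rbar) ^+ 2.
      by rewrite ler_wpM2l // exprn_ge0 // ltW.
    have -> : (L * rbar) ^+ 2 * K ^+ 2 / 2 = L ^+ 2 * (K * rbar) ^+ 2 / 2 by ring.
    lra.
  have t3 : (L * rbar) ^+ 2 * K ^+ 2 / 2 <= L * rbar * K ^+ 2.
    have hK : 0 <= K ^+ 2 by apply: sqr_ge0.
    rewrite expr2; nra.
  have -> : 2 * L * rbar * (1 + K ^+ 2 / 2) = 2 * (L * rbar) + L * rbar * K ^+ 2.
    by field.
  lra.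
apply: (le_trans eD); apply: (le_trans (ler_wpM2r (ltW D0) Mr)).
have -> : M / d * (1 + K ^+ 2 / 2) * (2 * L) = M / (d * rbar) * (2 * L * rbar * (1 + K ^+ 2 / 2)).
  transitivity (M / d * (rbar / rbar) * (1 + K ^+ 2 / 2) * (2 * L)); first by rewrite divff ?gt_eqF // mulr1.
  rewrite invfM; ring.
by rewrite ler_wpM2l // divr_ge0 // mulr_ge0 // ltW.
Qed.

Lemma lam_bounds (rbar : R) : 0 < rbar <= pi / 2 ->
  [/\ 0 < dil_lambda rbar, 1 <= dil_lambda rbar * rbar & dil_lambda rbar * rbar <= 2].
Proof.
case/andP=> rb0 rbpi.
have pi4 : pi < 4 :> R by have := @pihalf_lt2 R; lra.
have pi0 := @pi_gt0 R.
set u := rbar / 2.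
have u0 : 0 < u by rewrite /u; lra.
have upi : u <= pi / 4 by rewrite /u; lra.
have su : 0 < sin u by apply: sin_gt0_pihalf; rewrite u0 /=; lra.
have cu : 0 < cos u by apply: cos_gt0_pihalf; apply/andP; split; lra.
have sle := @sin_le_id u (ltW u0).
have ucs : u * cos u <= sin u by apply: id_cos_le_sin; apply/andP; split; lra.
have ch : 1 / 2 <= cos u.
  have := one_cos_le u.
  have : u ^+ 2 <= 1 by rewrite expr2; nra.
  lra.
rewrite /dil_lambda -/u; split.
- by rewrite divr_gt0.
- rewrite mulrAC ler_pdivlMr // mul1r; have -> : rbar = 2 * u by rewrite /u; lra.
  nra.
- rewrite mulrAC ler_pdivrMr //; have -> : rbar = 2 * u by rewrite /u; lra.
  nra.
Qed.
End T.

Theorem lemma3p1 (R : realType) (Cstar : R) (phi : 'rV[R]_3 -> R -> 'rV[R]_3 -> R)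
  (hphi : cutoff_family Cstar phi) (Lambda d : R) (hL : 1 <= Lambda) (hd : 0 < d) :
  exists C : R, forall (xbar : 'rV[R]_3) (rbar : R) (x : 'rV[R]_3) (r : R),
    on_S2 xbar -> 0 < rbar <= pi / 2 ->
    gball xbar (Lambda * rbar) x -> d * rbar < r < rbar ->
    dLinf_le (rho_dil xbar rbar) (phi x r) C.
Proof.
exists (`|Cstar| / d * (1 + (Lambda + 1) ^+ 2 / 2)).
move=> xbar rbar x r hxbar /andP[rb0 rbpi] [hx hgx] /andP[hdr hrr] y v hy [hyv hvv].
have pi0 := @pi_gt0 R.
have r0 : 0 < r by apply: lt_trans hdr; rewrite mulr_gt0.
have hr : 0 < r <= pi / 2 by rewrite r0 /= (le_trans (ltW hrr)).
have [[_ _ [r' r'r hsupp]] _ hD] := hphi x r hx hr.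
have hdy := hD y v hy (conj hyv hvv); rewrite divr1 in hdy.
have C0 : 0 <= `|Cstar| / d * (1 + (Lambda + 1) ^+ 2 / 2).
  apply: mulr_ge0; first by rewrite divr_ge0 // ltW.
  by rewrite addr_ge0 // divr_ge0 // sqr_ge0.
have [far|nearb] := ltP r' (gdist x y).
- suff -> : dfun (phi x r) y v = 0 by rewrite normr0 mul0r.
  rewrite /dfun derive1E.
  have curveS : forall t, on_S2 (cos t *: y + sin t *: v).
    move=> t; rewrite /on_S2 !dotE hy hvv (dotC v y) hyv.
    by rewrite -[RHS](cos2Dsin2 t); ring.
  have key : \forall t \near (0:R), phi x r (cos t *: y + sin t *: v) = cst 0 t.
    have [r'0|r'0] := ltP r' 0.
      apply: filterE => t; apply: hsupp (curveS t) _.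
      rewrite /gdist; apply: lt_le_trans r'0 _; apply: acos_ge0.
      exact: dot_range hx (curveS t).
    have r'pi : r' <= pi by lra.
    have hxy : dot x y < cos r' by rewrite -acos_lt ?dot_range // r'0 r'pi.
    have hc : continuous (fun t : R => cos t * dot x y + sin t * dot x v).
      move=> t; apply: cvgD; apply: cvgMl; [exact: continuous_cos | exact: continuous_sin].
    have := @cvgr_lt _ _ _ _ _ _ (hc 0) (cos r').
    rewrite /= cos0 sin0 mul1r mul0r addr0 => /(_ _ hxy) hn.
    apply: filterS hn => t ht; apply: hsupp (curveS t) _.
    rewrite /gdist acos_lt ?dot_range ?curveS ?r'0 ?r'pi //.
    by rewrite dotDr !dotZr.
  by rewrite (near_eq_derive _ key) derive_cst.
- have rr'0 : 0 <= r' := le_trans (acos_ge0 (@dot_range _ x y hx hy)) nearb.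
  have r'pi : r' <= pi by lra.
  have hxy : cos r' <= dot x y.
    by rewrite leNgt -acos_lt ?dot_range // ?rr'0 ?r'pi // -leNgt.
  have hcos : cos r <= cos r'.
    have i1 : r' \in `[0, pi] by rewrite in_itv /= rr'0 r'pi.
    have i2 : r \in `[0, pi] by rewrite in_itv /= ltW //=; lra.
    by apply: ltW; rewrite (ltr_cos i1 i2).
  have h1 : 2 * (1 - dot y x) <= r ^+ 2.
    have := one_cos_le r; rewrite dotC; lra.
  have Lr0 : 0 < Lambda * rbar by rewrite mulr_gt0 //; lra.
  have h2 : 2 * (1 - dot x xbar) <= (Lambda * rbar) ^+ 2.
    rewrite dotC; have [hl|hl] := leP (Lambda * rbar) pi.
      have : cos (Lambda * rbar) < dot xbar x.
        by rewrite -acos_gt ?dot_range // ?hl ?ltW.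
      have := one_cos_le (Lambda * rbar); lra.
    have := @pi_ge2 R; have := @dot_range _ xbar x hxbar hx.
    case/andP=> ? ? ?; rewrite expr2; nra.
  have h3 := @tri _ y x xbar _ _ hy hx hxbar r0 Lr0 h1 h2.
  have h4 : 2 * (1 - dot y xbar) <= ((Lambda + 1) * rbar) ^+ 2.
    apply: (le_trans h3); rewrite !expr2; nra.
  have [L0 Lr1 Lr2] := @lam_bounds _ rbar (introT andP (conj rb0 rbpi)).
  rewrite /rho_dil /=.
  apply: (@final_real _ _ _ r d rbar _ _ (Lambda + 1)) => //.
  + apply: (le_trans hdy); apply: ler_wpM2r; first by rewrite invr_ge0 ltW.
    exact: real_ler_norm (num_real _).
  + exact: (@dot_range _ y xbar hy hxbar).
Qed.
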